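(* Let $r\in\mathbb{R}_+$. The map $(\mathbb{R}^2)^n\to\big[2^{\mathbb{R}^2}\big]^n$ given by $(p_1,\dots,p_n)\mapsto\big(\mathcal{N}_{\mathcal{G}_{\mathrm{LD}}(\{p_1,\dots,p_n\},r)}(p_1),\dots,\mathcal{N}_{\mathcal{G}_{\mathrm{LD}}(\{p_1,\dots,p_n\},r)}(p_n)\big)$ is spatially distributed over the $r$-disk graph $\mathcal{G}_{\mathrm{disk}}(\{p_1,\dots,p_n\},r)$.
   Context: For a tuple $(p_1,\dots,p_n)\in(\mathbb{R}^2)^n$ (possibly with repeated entries), $\mathcal{P}=\{p_1,\dots,p_n\}$ denotes the set of its distinct points. For such a point set, the Voronoi cell of $p_i$ is $V_i(\mathcal{P})=\{q\in\mathbb{R}^2:\|q-p_i\|\le\|q-p_j\|\ \forall p_j\in\mathcal{P}\}$; $B_\rho(p)$ is the closed Euclidean ball of radius $\rho$ about $p$. The $r$-disk graph $\mathcal{G}_{\mathrm{disk}}(\mathcal{P},r)$ has vertex set $\mathcal{P}$ and an edge between distinct $p_i,p_j$ iff $\|p_i-p_j\|\le r$. The $r$-limited Delaunay graph $\mathcal{G}_{\mathrm{LD}}(\mathcal{P},r)$ has vertex set $\mathcal{P}$ and an edge between distinct $p_i,p_j$ iff $\big(V_i(\mathcal{P})\cap B_{r/2}(p_i)\big)\cap\big(V_j(\mathcal{P})\cap B_{r/2}(p_j)\big)\neq\emptyset$. $\mathcal{N}_{\mathcal{G}}(p)$ denotes the set of neighbors of vertex $p$ in the graph $\mathcal{G}$.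 Given a proximity graph function $\mathcal{G}$ (assigning a graph with vertex set $\mathcal{P}$ to each point set $\mathcal{P}$) and a set $Y$, a map $f:(\mathbb{R}^2)^n\to Y^n$ is spatially distributed over $\mathcal{G}$ if there exist maps $\tilde f_i:\mathbb{R}^2\times 2^{\mathbb{R}^2}\to Y$, $i=1,\dots,n$, such that for all $(p_1,\dots,p_n)$, the $i$-th component satisfies $f_i(p_1,\dots,p_n)=\tilde f_i\big(p_i,\{p_j: p_j\in\mathcal{N}_{\mathcal{G}(\{p_1,\dots,p_n\})}(p_i)\}\big)$. *)

(* Defs.v *)
From Stdlib Require Import Reals.
From mathcomp Require Import ssreflect ssrbool fintype.
Open Scope R_scope.

Definition pt : Type := (R * R)%type.

Definition dist2 (p q : pt) : R :=
  sqrt ((fst p - fst q) ^ 2 + (snd p - snd q) ^ 2).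

Definition pset : Type := pt -> Prop.

Definition pts {n : nat} (p : 'I_n -> pt) : pset := fun q => exists i, p i = q.

Definition voronoi (P : pset) (c : pt) : pset :=
  fun q => forall pj, P pj -> dist2 q c <= dist2 q pj.

Definition ball2 (rho : R) (c : pt) : pset := fun q => dist2 q c <= rho.

Definition proxgraph : Type := pset -> pt -> pt -> Prop.

Definition G_disk (r : R) : proxgraph :=
  fun P a b => P a /\ P b /\ a <> b /\ dist2 a b <= r.

Definition G_LD (r : R) : proxgraph :=
  fun P a b => P a /\ P b /\ a <> b /\
    exists q, (voronoi P a q /\ ball2 (r / 2) a q) /\
              (voronoi P b q /\ ball2 (r / 2) b q).

Definition nbrs (G : proxgraph) (P : pset) (a : pt) : pset := fun b => G P a b.

Definition spatially_distributed {n : nat} {Y : Type}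
  (G : proxgraph) (f : ('I_n -> pt) -> ('I_n -> Y)) : Prop :=
  exists ft : 'I_n -> pt -> pset -> Y,
    forall (p : 'I_n -> pt) (i : 'I_n),
      f p i = ft i (p i) (fun q => (exists j, p j = q) /\ nbrs G (pts p) (p i) q).

(* Main.v *)
Require Import Defs.
From Stdlib Require Import Reals.
From mathcomp Require Import ssreflect ssrbool fintype.
From Stdlib Require Import Rgeom Lra Classical FunctionalExtensionality PropExtensionality.
Open Scope R_scope.

Lemma dist2_euc (a b : pt) : dist2 a b = dist_euc (fst a) (snd a) (fst b) (snd b).
Proof. rewrite /dist2 /dist_euc /Rsqr. f_equal. ring. Qed.

Lemma dist2_sym a b : dist2 a b = dist2 b a.
Proof. rewrite !dist2_euc. apply distance_symm. Qed.

Lemma dist2_tri a b c : dist2 a c <= dist2 a b + dist2 b c.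
Proof. rewrite !dist2_euc. apply triangle. Qed.

Theorem lemma1p5 (n : nat) (r : R) (hr : 0 < r) :
  spatially_distributed (Y := pset) (G_disk r)
    (fun (p : 'I_n -> pt) (i : 'I_n) => nbrs (G_LD r) (pts p) (p i)).
Proof.
  exists (fun _ c S b => S b /\ exists q, (forall pj, S pj -> dist2 q c <= dist2 q pj)
            /\ dist2 q c <= r / 2 /\ dist2 q b = dist2 q c).
  move=> p i.
  apply functional_extensionality => b.
  apply propositional_extensionality.
  rewrite /nbrs /G_LD /G_disk /pts /voronoi /ball2.
  split.
  - move=> [Pc [Pb [ne [q [[Vc Bc] [Vb Bb]]]]]].
    have Hbc : dist2 q b = dist2 q (p i).
    { have := Vc b Pb. have := Vb (p i) Pc. lra. }
    split.
    + split; first exact Pb. split; first exact Pc. split; first exact Pb.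
      split; first exact ne.
      have := dist2_tri (p i) q b. rewrite (dist2_sym (p i) q). lra.
    + exists q. split; last by split.
      move=> pj [[j Hj] _]. apply Vc. by exists j.
  - move=> [[Pb [_ [_ [ne Db]]]] [q [Vq [Bq Eq]]]].
    have Pc : exists j, p j = p i by exists i.
    split; first exact Pc. split; first exact Pb. split; first exact ne.
    exists q.
    have Vc : forall pj, (exists j, p j = pj) -> dist2 q (p i) <= dist2 q pj.
    { move=> pj Hpj.
      destruct (classic (pj = p i)) as [->|Hne]; first lra.
      destruct (Rle_or_lt (dist2 (p i) pj) r) as [Hle|Hlt].
      - apply Vq. split; first exact Hpj. split; first exact Pc.
        split; first exact Hpj. split; [by auto | exact Hle].
      - have := dist2_tri (p i) q pj. rewrite (dist2_sym (p i) q). lra. }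
    split; split; try exact Vc; try lra.
    move=> pj Hpj. rewrite Eq. by apply Vc.
Qed.
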